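(* Let $M$ be a real $n\times n$ matrix and $v\in\mathbb R^n$, and suppose $\|M-vv^\top\|\le\|M\|-\epsilon\|v\|^2$. Then if $u,w$ are top unit left and right singular vectors of $M$, respectively, $\langle u,v\rangle^2\ge\epsilon\|v\|^2$ or $\langle w,v\rangle^2\ge\epsilon\|v\|^2$.
   Context: $\|\cdot\|$ is the spectral norm for matrices and Euclidean norm for vectors. *)

(* Defs.v *)
From HB Require Import structures.
From mathcomp Require Import all_boot all_order all_algebra.
From mathcomp Require Import boolp classical_sets reals.
Set Implicit Arguments. Unset Strict Implicit. Unset Printing Implicit Defensive.
Import Order.TTheory GRing.Theory Num.Theory.
Local Open Scope ring_scope.
Local Open Scope classical_set_scope.

Definition vnorm (R : realType) (n : nat) (x : 'cV[R]_n) : R :=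
  Num.sqrt (\sum_(i < n) x i 0 ^+ 2).

Definition dotv (R : realType) (n : nat) (x y : 'cV[R]_n) : R :=
  \sum_(i < n) x i 0 * y i 0.

Definition specnorm (R : realType) (n : nat) (M : 'M[R]_n) : R :=
  sup [set vnorm (M *m x) | x in [set x : 'cV[R]_n | vnorm x = 1]].

Definition top_singular_pair (R : realType) (n : nat) (M : 'M[R]_n)
    (u w : 'cV[R]_n) : Prop :=
  [/\ vnorm u = 1, vnorm w = 1,
      M *m w = specnorm M *: u & M^T *m u = specnorm M *: w].

(* Main.v *)
Require Import Defs.
From HB Require Import structures.
From mathcomp Require Import all_boot all_order all_algebra.
From mathcomp Require Import boolp classical_sets reals.
From mathcomp Require Import ring lra.
Import Order.TTheory GRing.Theory Num.Theory.
Local Open Scope ring_scope.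

Section H.
Variable R : realType.
Variable n : nat.

Lemma dotvE (x y : 'cV[R]_n) : dotv x y = (x^T *m y) 0 0.
Proof. by rewrite /dotv mxE; apply: eq_bigr => i _; rewrite mxE. Qed.

Lemma sumsq_ge0 (x : 'cV[R]_n) : 0 <= \sum_(i < n) x i 0 ^+ 2.
Proof. by apply: sumr_ge0 => i _; rewrite sqr_ge0. Qed.

Lemma vnorm_sq (x : 'cV[R]_n) : vnorm x ^+ 2 = dotv x x.
Proof.
rewrite /vnorm sqr_sqrtr ?sumsq_ge0 //.
Qed.

Lemma dot_le_norm (u y : 'cV[R]_n) : vnorm u = 1 -> dotv u y <= vnorm y.
Proof.
move=> hu.
have huu : dotv u u = 1 by rewrite -vnorm_sq hu expr1n.
set t := dotv u y.
have h0 : 0 <= \sum_(i < n) (y i 0 - t * u i 0) ^+ 2.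
  by apply: sumr_ge0 => i _; rewrite sqr_ge0.
have hexp : \sum_(i < n) (y i 0 - t * u i 0) ^+ 2
   = dotv y y - 2 * t * dotv u y + t ^+ 2 * dotv u u.
  transitivity (\sum_(i < n) (y i 0 * y i 0 - (2 * t) * (u i 0 * y i 0)
                         + t ^+ 2 * (u i 0 * u i 0))).
    by apply: eq_bigr => i _; ring.
  by rewrite big_split sumrB /= -!mulr_sumr.
rewrite hexp huu -/t in h0.
have hyy : t ^+ 2 <= vnorm y ^+ 2 by rewrite vnorm_sq; lra.
have hn : 0 <= vnorm y by rewrite /vnorm sqrtr_ge0.
case: (lerP t 0) => ht; first lra.
rewrite -(ler_pXn2r (n:=2)) // ?nnegrE //; lra.
Qed.

Lemma bounded (A : 'M[R]_n) : exists B, forall x : 'cV[R]_n,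
  vnorm x = 1 -> vnorm (A *m x) <= B.
Proof.
exists (Num.sqrt (\sum_(i < n) (\sum_(j < n) `|A i j|) ^+ 2)).
move=> x hx.
rewrite /vnorm ler_sqrt; last by apply: sumr_ge0 => i _; rewrite sqr_ge0.
apply: ler_sum => i _.
have hxj : forall j, `|x j 0| <= 1.
  move=> j.
  have : x j 0 ^+ 2 <= 1.
    have -> : 1 = vnorm x ^+ 2 by rewrite hx expr1n.
    rewrite /vnorm sqr_sqrtr ?sumsq_ge0 //.
    rewrite (bigD1 j) //= lerDl; apply: sumr_ge0 => k _; by rewrite sqr_ge0.
  move=> h; have := real_normK (num_real (x j 0)).
  have := normr_ge0 (x j 0); nra.
rewrite mxE -real_normK ?num_real //.
rewrite ler_pXn2r ?nnegrE ?normr_ge0 ?sumr_ge0 //; try by move=> j _; rewrite normr_ge0.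
apply: (le_trans (ler_norm_sum _ _ _)); apply: ler_sum => j _.
rewrite normrM; have := hxj j; have := normr_ge0 (A i j); have := normr_ge0 (x j 0); nra.
Qed.

End H.

Theorem mainTheorem14 (R : realType) (n : nat) (M : 'M[R]_n) (v : 'cV[R]_n)
    (eps : R) (u w : 'cV[R]_n) :
  specnorm (M - v *m v^T) <= specnorm M - eps * vnorm v ^+ 2 ->
  top_singular_pair M u w ->
  eps * vnorm v ^+ 2 <= dotv u v ^+ 2 \/ eps * vnorm v ^+ 2 <= dotv w v ^+ 2.
Proof.
move=> hN [hu hw hMw hMu].
set s := specnorm M in hN hMw hMu.
set c := eps * vnorm v ^+ 2 in hN *.
set N := M - v *m v^T in hN.
have hsup : vnorm (N *m w) <= specnorm N.
  have [B hB] := @bounded R n N.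
  apply: sup_upper_bound; last by exists w.
  split; first by exists (vnorm (N *m w)); exists w.
  by exists B => _ [x hx <-]; apply: hB.
have hd := @dot_le_norm R n u (N *m w) hu.
have hval : dotv u (N *m w) = s - dotv u v * dotv w v.
  have huu : dotv u u = 1 by rewrite -vnorm_sq hu expr1n.
  rewrite !dotvE in huu *.
  rewrite /N mulmxBl mulmxBr hMw -scalemxAr mxE mxE huu mulr1.
  rewrite [in LHS]mxE; congr (_ - _).
  rewrite !mulmxA -(mulmxA (u^T *m v) v^T w) mxE big_ord1.
  rewrite -!dotvE; congr (_ * _).
  by rewrite /dotv; apply: eq_bigr => i _; rewrite mulrC.
have hab : c <= dotv u v * dotv w v by lra.
set a := dotv u v in hab *; set b := dotv w v in hab *.
case: (lerP c (a ^+ 2)) => h1; first by left.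
right; case: (lerP c 0) => hc.
  have := sqr_ge0 b; lra.
case: (lerP c (b ^+ 2)) => h2 //.
have : (a * b) ^+ 2 < c ^+ 2.
  rewrite exprMn; have := sqr_ge0 a; have := sqr_ge0 b; nra.
nra.
Qed.
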